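(* In the top-$k$ allocation setting, the audit policy \textsc{uniform-k} is $\varepsilon^*$-DSIC where $\varepsilon^*$ is the smallest $\varepsilon$ for which some audit policy with budget $B$ is $\varepsilon$-DSIC; i.e. \textsc{uniform-k} is an optimal audit policy under the dominant-strategy incentive compatibility criterion.
   Context: Model: there are $n$ agents. Agent $i$ has a true type $\mathbf{a}_i=(\mathbf{x}_i,\mathbf{z}_i)$, where $\mathbf{x}_i$ is a known (verifiable) partial type and $\mathbf{z}_i\in I^s$ is a self-reported partial type. Agent $i$ reports $\mathbf{a}_i'=(\mathbf{x}_i,\mathbf{z}_i')$. In the top-$k$ allocation setting, resources go to the $k$ agents with the highest reported scores under a score function $f$; $\alpha_i(f,\mathcal{A}')\in\{0,1\}$ indicates allocation to agent $i$ given reports $\mathcal{A}'$. An audit policy maps each set of reports $\mathcal{A}'$ to probabilities $\phi_i(\mathcal{A}')\in[0,1]$ with $\sum_i\phi_i(\mathcal{A}')\le B$. An audited liar loses the resource and pays penalty $c\ge0$: a lying agent's utility is $\alpha_i(f,\mathcal{A}')(1-\phi_i(\mathcal{A}'))-c\,\phi_i(\mathcal{A}')$, a truthful agent's utility is $\alpha_i(f,\mathcal{A})$. A policy $\phi$ is $\varepsilon$-DSIC if for every agent $i$, every true type $\mathbf{a}_i$, every report $\mathbf{a}_i'$ with the same known part $\mathbf{x}_i$, and every profile of other agents' reports $\mathcal{A}'_{-i}$, the expected utility (over the randomness of auditing) of reporting truthfully is at least the expected utility of reporting $\mathbf{a}_i'$ minus $\varepsilon$. The policy \textsc{uniform-k}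 audits each agent among the $k$ highest-scoring reports in $\mathcal{A}'$ with probability $\min(1,B/k)$ and audits no other agent. *)

(* Defs.v *)
From mathcomp Require Import all_boot all_order all_algebra.
Set Implicit Arguments. Unset Strict Implicit. Unset Printing Implicit Defensive.
Import Order.TTheory GRing.Theory Num.Theory.
Local Open Scope ring_scope.

(* An agent type (x, z): x : X is the known (verifiable) partial type,
   z : 'I_s -> R is the self-reported partial type (a point of R^s). *)
Definition agent_type (R X : Type) (s : nat) := (X * ('I_s -> R))%type.

Definition profile (R X : Type) (n s : nat) := 'I_n -> agent_type R X s.

Definition in_Is (R : Type) (s : nat) (I : R -> Prop) (z : 'I_s -> R) : Prop :=
  forall t : 'I_s, I (z t).

Definition valid_profile (R X : Type) (n s : nat) (I : R -> Prop)
  (A : profile R X n s) : Prop := forall j : 'I_n, in_Is I (A j).2.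

Definition upd (R X : Type) (n s : nat) (A : profile R X n s) (i : 'I_n)
  (a : agent_type R X s) : profile R X n s :=
  fun j => if j == i then a else A j.

Definition score (R : realFieldType) (X : Type) (s : nat)
  (f : X -> ('I_s -> R) -> R) (a : agent_type R X s) : R := f a.1 a.2.

Definition ranked_before (R : realFieldType) (X : Type) (n s : nat)
  (f : X -> ('I_s -> R) -> R) (A : profile R X n s) (i j : 'I_n) : bool :=
  (score f (A i) < score f (A j)) || ((score f (A j) == score f (A i)) && (j < i)%N).

Definition alloc (R : realFieldType) (X : Type) (n s : nat)
  (f : X -> ('I_s -> R) -> R) (k : nat) (A : profile R X n s) (i : 'I_n) : R :=
  if (#|[pred j : 'I_n | ranked_before f A i j]| < k)%N then 1 else 0.

Definition is_audit_policy (R : realFieldType) (X : Type) (n s : nat)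
  (I : R -> Prop) (B : R) (phi : profile R X n s -> 'I_n -> R) : Prop :=
  forall A : profile R X n s, valid_profile I A ->
    (forall i, 0 <= phi A i <= 1) /\ \sum_(i < n) phi A i <= B.

(* eps-DSIC: for every agent i, true type a, report a' with the same known
   part, and reports A' of the others (entry i of A' is overwritten),
   truthful utility >= lying utility - eps. *)
Definition eps_DSIC (R : realFieldType) (X : Type) (n s : nat)
  (I : R -> Prop) (f : X -> ('I_s -> R) -> R) (k : nat) (c : R)
  (phi : profile R X n s -> 'I_n -> R) (eps : R) : Prop :=
  forall (i : 'I_n) (a a' : agent_type R X s) (A' : profile R X n s),
    in_Is I a.2 -> in_Is I a'.2 -> a'.1 = a.1 -> valid_profile I A' ->
    alloc f k (upd A' i a') i * (1 - phi (upd A' i a') i)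
      - c * phi (upd A' i a') i - eps
    <= alloc f k (upd A' i a) i.

Definition uniform_k (R : realFieldType) (X : Type) (n s : nat)
  (f : X -> ('I_s -> R) -> R) (k : nat) (B : R)
  (A : profile R X n s) (i : 'I_n) : R :=
  if alloc f k A i == 1 then Num.min 1 (B / k%:R) else 0.

(* Main.v *)
Require Import Defs.
From mathcomp Require Import all_boot all_order all_algebra.
Import Order.TTheory GRing.Theory Num.Theory.
Local Open Scope ring_scope.

Section Aux.
Variables (R : realFieldType) (X : Type) (n s : nat) (f : X -> ('I_s -> R) -> R).

Lemma rb_irr (A : profile R X n s) i : ranked_before f A i i = false.
Proof. by rewrite /ranked_before ltxx ltnn andbF. Qed.

Lemma rb_trans (A : profile R X n s) i j l :
  ranked_before f A i j -> ranked_before f A j l -> ranked_before f A i l.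
Proof.
rewrite /ranked_before.
set a := score f (A i); set b := score f (A j); set d := score f (A l).
case/orP=> [ab|/andP[/eqP ba ji]]; case/orP=> [bd|/andP[/eqP db lj]].
- by rewrite (lt_trans ab bd).
- by rewrite db ab.
- by rewrite -ba bd.
- by rewrite db ba eqxx (ltn_trans lj ji) orbT.
Qed.

Lemma rb_total (A : profile R X n s) i j :
  i != j -> ranked_before f A i j || ranked_before f A j i.
Proof.
move=> nij; rewrite /ranked_before.
set a := score f (A i); set b := score f (A j).
case: (ltgtP a b) => //= _.
by rewrite -(inj_eq val_inj) neq_ltn orbC in nij.
Qed.

Definition cnt (A : profile R X n s) i := #|[pred j : 'I_n | ranked_before f A i j]|.

Lemma cnt_lt (A : profile R X n s) i j :
  ranked_before f A i j -> (cnt A j < cnt A i)%N.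
Proof.
move=> h; apply: proper_card; apply/properP; split.
  by apply/subsetP=> l; rewrite !inE => hl; exact: rb_trans h hl.
by exists j; rewrite !inE ?rb_irr.
Qed.

Lemma cnt_inj (A : profile R X n s) : injective (cnt A).
Proof.
move=> i j e; apply/eqP; apply/negPn/negP=> nij.
case/orP: (rb_total A _ _ nij) => /cnt_lt; rewrite e ltnn //.
Qed.


Lemma alloc_cnt k (A : profile R X n s) i :
  alloc f k A i = if (cnt A i < k)%N then 1 else 0.
Proof. by []. Qed.

Lemma unif_cnt k B (A : profile R X n s) i :
  uniform_k f k B A i = if (cnt A i < k)%N then Num.min 1 (B / k%:R) else 0.
Proof.
rewrite /uniform_k alloc_cnt; case: (cnt A i < k)%N; first by rewrite eqxx.
by rewrite eq_sym oner_eq0.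
Qed.

Lemma p_range k (B : R) : 0 <= B -> 0 <= Num.min 1 (B / k%:R) <= 1.
Proof.
move=> hB; have h0 : 0 <= B / k%:R by rewrite divr_ge0.
case: (lerP 1 (B / k%:R)) => h; apply/andP; split => //; rewrite ?ler01 //.
exact: ltW.
Qed.

Lemma unif_range k B (A : profile R X n s) i : 0 <= B ->
  0 <= uniform_k f k B A i <= 1.
Proof.
move=> hB; rewrite unif_cnt; case: ifP => _; first exact: p_range.
by rewrite lexx ler01.
Qed.

Lemma card_win k (A : profile R X n s) :
  (#|[pred i : 'I_n | (cnt A i < k)%N]| <= k)%N.
Proof.
case: k => [|k].
  by apply/eq_leq/eq_card0 => i; rewrite inE ltn0.
rewrite -[X in (_ <= X)%N]card_ord.
apply: (@leq_card_in _ _ (fun i => inord (cnt A i) : 'I_k.+1)) => i j.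
rewrite !inE => hi hj /(congr1 val); rewrite /= !inordK // => e.
exact: cnt_inj e.
Qed.

End Aux.
Arguments cnt {R X n s} f A i.
Arguments card_win {R X n s} f k A.
Arguments unif_cnt {R X n s} f k B A i.
Arguments p_range {R} k B _.
Arguments unif_range {R X n s} f k B A i _.
Arguments rb_irr {R X n s} f A i.
Arguments rb_trans {R X n s} f A i j l _ _.
Arguments cnt_inj {R X n s} f A.
Arguments cnt_lt {R X n s} f A i j _.

From Stdlib Require Import FunctionalExtensionality.
From mathcomp Require Import lra.

Lemma part1 (R : realFieldType) (X : Type) (n s k : nat)
  (I : R -> Prop) (f : X -> ('I_s -> R) -> R) (B : R) :
  0 <= B -> is_audit_policy I B (uniform_k (n:=n) f k B).
Proof.
move=> hB A _; split=> [i|]; first exact: unif_range.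
set p := Num.min 1 (B / k%:R).
rewrite (eq_bigr (fun i => if (cnt f A i < k)%N then p else 0)); last first.
  by move=> i _; rewrite unif_cnt.
rewrite -big_mkcond sumr_const -mulr_natr.
have hm := card_win f k A.
move: (#|_|) hm => m hm.
have /andP[p0 p1] := p_range k B hB.
case: k hm @p p0 p1 => [|k] hm p p0 p1.
  by move: hm; rewrite leqn0 => /eqP ->; rewrite mulr0.
have hmk : (m%:R <= k.+1%:R :> R) by rewrite ler_nat.
have hk : (0 < k.+1%:R :> R) by rewrite ltr0n.
apply: (le_trans (y := p * k.+1%:R)); first by rewrite ler_wpM2l.
have : p <= B / k.+1%:R by rewrite /p; case: (lerP 1 (B / k.+1%:R)) => // /ltW.
by rewrite ler_pdivlMr.
Qed.

Lemma card_lt_ord (n j : nat) : (#|[pred l : 'I_n | (l < j)%N]| <= j)%N.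
Proof.
case: j => [|j].
  by apply/eq_leq/eq_card0 => l; rewrite inE ltn0.
rewrite -[X in (_ <= X)%N]card_ord.
apply: (@leq_card_in _ _ (fun l : 'I_n => inord l : 'I_j.+1)) => a b.
rewrite !inE => ha hb /(congr1 val); rewrite /= !inordK // => e.
exact: val_inj.
Qed.

Lemma part2 (R : realFieldType) (X : Type) (n s k : nat)
  (I : R -> Prop) (f : X -> ('I_s -> R) -> R) (B c : R) :
  0 <= B -> 0 <= c ->
  (forall (phi : profile R X n s -> 'I_n -> R) (eps : R),
     0 <= eps -> is_audit_policy I B phi -> eps_DSIC I f k c phi eps ->
     eps_DSIC I f k c (uniform_k (n:=n) f k B) eps).
Proof.
move=> hB hc phi eps he hphi hds i a a' A' ha ha' hx hA'.
set P := upd A' i a'; set T := upd A' i a.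
have /andP[u0 u1] := unif_range f k B P i hB.
rewrite !alloc_cnt.
have cu : 0 <= c * uniform_k f k B P i by rewrite mulr_ge0.
case hT: (cnt f T i < k)%N.
  case: (cnt f P i < k)%N; lra.
case hP: (cnt f P i < k)%N; last lra.
rewrite unif_cnt hP.
set p := Num.min 1 (B / k%:R).
have hsc : score f a < score f a'.
  rewrite ltNge; apply/negP => hle.
  have : (cnt f T i <= cnt f P i)%N.
    apply: subset_leq_card; apply/subsetP => l; rewrite !inE.
    case: (eqVneq l i) => [->|nli]; first by rewrite rb_irr.
    rewrite /ranked_before /P /T /upd (negbTE nli) eqxx.
    case/orP=> [h|/andP[/eqP e li]].
      by rewrite (le_lt_trans hle h).
    move: (hle); rewrite le_eqVlt => /orP[/eqP e'|lt'].
      by rewrite e e' eqxx li orbT.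
    by rewrite e lt'.
  by move=> h; move: hT; rewrite (leq_ltn_trans h hP).
have hkn : (k <= n.-1)%N.
  have h1 : (k <= cnt f T i)%N by rewrite leqNgt hT.
  apply: (leq_trans h1); rewrite -[in X in (_ <= X)%N](card_ord n) -(cardC1 i).
  apply: subset_leq_card; apply/subsetP => l; rewrite !inE.
  by apply: contraTneq => ->; rewrite rb_irr.
have hk : (k <= n)%N by apply: leq_trans hkn (leq_pred n).
pose Q : profile R X n s := fun _ => a'.
have vQ : valid_profile I Q by move=> j.
have key : forall j : 'I_n, (j < k)%N -> 1 - eps <= (1 + c) * phi Q j.
  move=> j jk.
  have := hds j a a' Q ha ha' hx vQ.
  have -> : upd Q j a' = Q.
    by apply: functional_extensionality => l; rewrite /upd if_same.
  rewrite !alloc_cnt.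
  have -> : (cnt f Q j < k)%N = true.
    apply: leq_ltn_trans _ jk; apply: leq_trans (card_lt_ord n j).
    apply: subset_leq_card; apply/subsetP=> l.
    by rewrite !inE /ranked_before /Q ltxx eqxx.
  have -> : (cnt f (upd Q j a) j < k)%N = false.
    apply/negbTE; rewrite -leqNgt; apply: leq_trans hkn _.
    rewrite -[in X in (X <= _)%N](card_ord n) -(cardC1 j).
    apply: subset_leq_card; apply/subsetP => l; rewrite !inE => nlj.
    by rewrite /ranked_before /upd eqxx (negbTE nlj) hsc.
  move=> h; nra.
have [hr hs] := hphi Q vQ.
have sumk : (1 - eps) *+ k <= (1 + c) * B.
  have : \sum_(j < k) (1 - eps) <= \sum_(j < k) (1 + c) * phi Q (widen_ord hk j).
    by apply: ler_sum => j _; apply: key; rewrite /= ltn_ord.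
  rewrite sumr_const card_ord -mulr_sumr => h1; apply: le_trans h1 _.
  apply: ler_wpM2l; first lra.
  rewrite -(big_ord_narrow (F := phi Q) hk).
  apply: le_trans hs.
  rewrite [X in _ <= X](bigID (fun j : 'I_n => (j < k)%N)) /= lerDl.
  by apply: sumr_ge0 => j _; case/andP: (hr j).
have k0 : (0 < k%:R :> R) by rewrite ltr0n; case: (k) hP.
rewrite /p; case: (lerP 1 (B / k%:R)) => _; first lra.
have h2 : 1 - eps <= (1 + c) * B / k%:R by rewrite ler_pdivlMr // mulr_natr.
move: h2; rewrite mulrDl mul1r mulrDl -mulrA.
set q := B / k%:R; lra.
Qed.

Theorem mainTheorem6 (R : realFieldType) (X : Type) (n s k : nat)
  (I : R -> Prop) (f : X -> ('I_s -> R) -> R) (B c : R) :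
  0 <= B -> 0 <= c ->
  is_audit_policy I B (uniform_k (n:=n) f k B) /\
  (forall (phi : profile R X n s -> 'I_n -> R) (eps : R),
     0 <= eps -> is_audit_policy I B phi -> eps_DSIC I f k c phi eps ->
     eps_DSIC I f k c (uniform_k (n:=n) f k B) eps).
Proof.
move=> hB hc; split; first exact: part1.
exact: part2.
Qed.
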